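(* For all integers $m\ge1$, $r\ge0$ and $n\ge0$, $$\mathcal D_{m,r}(n,x)=\frac1{n+1}\sum_{k=0}^n\sum_{l=0}^{n-k}\sum_{s=0}^l\binom{n+1}{l+1}\binom{l+1}{s+1}W_{m,r}(n-l,k)\,m^{l-s}\,T^{[m]}_{s+1}(1)\,\mathcal B_{l-s}\,\mathcal B_k(x).$$
   Context: The Bernoulli polynomials are defined by $\sum_{n\ge0}\mathcal B_n(x)\frac{t^n}{n!}=\frac{te^{xt}}{e^t-1}$ and $\mathcal B_n:=\mathcal B_n(0)$. For integers $m\ge1$, $n,k,r\ge0$, $W_{m,r}(n,k)$ denotes the $r$-Whitney number of the second kind, defined by $\sum_{n\ge k}W_{m,r}(n,k)\frac{z^n}{n!}=\frac{e^{rz}}{k!}\left(\frac{e^{mz}-1}{m}\right)^k$; the $r$-Dowling polynomial is $\mathcal D_{m,r}(n,u):=\sum_{k=0}^nW_{m,r}(n,k)u^k$; and the $[m]$-Touchard polynomials are $T^{[m]}_n(x):=\sum_{k=0}^n W_{m,0}(n,k)x^k$. *)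

(* Defs.v *)
From HB Require Import structures.
From mathcomp Require Import all_boot all_order all_algebra.
Set Implicit Arguments. Unset Strict Implicit. Unset Printing Implicit Defensive.
Import Order.TTheory GRing.Theory Num.Theory.
Local Open Scope ring_scope.

(* Bernoulli numbers B_0..B_n from t/(e^t-1) = sum B_n t^n/n!, i.e. the coefficient
   recurrence of  (e^t - 1) * B(t) = t :  B_0 = 1, sum_{j<=n} C(n+1,j) B_j = 0 (n>=1). *)
Fixpoint bern_list (n : nat) : seq rat :=
  match n with
  | 0 => [:: 1]
  | n'.+1 => let s := bern_list n' in
      rcons s (- (n'.+2)%:R^-1 * \sum_(j < n'.+1) ('C(n'.+2, j))%:R * nth 0 s j)
  end.

Definition bern (n : nat) : rat := nth 0 (bern_list n) n.

(* Bernoulli polynomial: t e^{xt}/(e^t-1) = sum B_n(x) t^n/n!, so B_n(x) = sum_k C(n,k) B_k x^{n-k}. *)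
Definition bernpoly (n : nat) : {poly rat} :=
  \sum_(k < n.+1) (('C(n, k))%:R * bern k) *: 'X^(n - k).

(* r-Whitney numbers of the second kind: coefficient of z^n/n! in
   e^{rz}/k! ((e^{mz}-1)/m)^k, i.e.
   W_{m,r}(n,k) = 1/(m^k k!) sum_{j=0}^k (-1)^{k-j} C(k,j) (mj+r)^n. *)
Definition whitney (m r n k : nat) : rat :=
  ((m%:R ^+ k) * (k`!)%:R)^-1 *
  \sum_(j < k.+1) ((-1) ^+ (k - j) * ('C(k, j))%:R * ((m * j + r)%N%:R) ^+ n).

Definition dowling (m r n : nat) : {poly rat} :=
  \sum_(k < n.+1) whitney m r n k *: 'X^k.

Definition touchard (m n : nat) : {poly rat} :=
  \sum_(k < n.+1) whitney m 0 n k *: 'X^k.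

(* Main.v *)
Require Import Defs.
From HB Require Import structures.
From mathcomp Require Import all_boot all_order all_algebra.
From mathcomp Require Import ring.
Import Order.TTheory GRing.Theory Num.Theory.
Local Open Scope ring_scope.

Definition eqm (N : nat) (p q : {poly rat}) := forall i, (i < N)%N -> p`_i = q`_i.

Lemma eqm_refl N p : eqm N p p. Proof. by []. Qed.
Lemma eqm_sym N p q : eqm N p q -> eqm N q p. Proof. by move=> h i hi; rewrite h. Qed.
Lemma eqm_trans N p q s : eqm N p q -> eqm N q s -> eqm N p s.
Proof. by move=> h1 h2 i hi; rewrite h1 // h2. Qed.
Lemma eqmM N p p' q q' : eqm N p p' -> eqm N q q' -> eqm N (p*q) (p'*q').
Proof.
move=> hp hq i hi; rewrite !coefM; apply: eq_bigr => -[j hj] _ /=.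
have h1 : (j < N)%N by apply: leq_ltn_trans hi; rewrite -ltnS.
have h2 : (i - j < N)%N by exact: leq_ltn_trans (leq_subr j i) hi.
by rewrite hp // hq.
Qed.
Lemma eqmD N p p' q q' : eqm N p p' -> eqm N q q' -> eqm N (p+q) (p'+q').
Proof. by move=> hp hq i hi; rewrite !coefD hp ?hq. Qed.
Lemma eqmB N p p' q q' : eqm N p p' -> eqm N q q' -> eqm N (p-q) (p'-q').
Proof. by move=> hp hq i hi; rewrite !coefB hp ?hq. Qed.
Lemma eqmZ N a p p' : eqm N p p' -> eqm N (a *: p) (a *: p').
Proof. by move=> hp i hi; rewrite !coefZ hp. Qed.
Lemma eqmX N p p' k : eqm N p p' -> eqm N (p ^+ k) (p' ^+ k).
Proof. by move=> h; elim: k => [|k ih]; rewrite ?expr0 // !exprS; apply: eqmM. Qed.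
Lemma eqm_sum N I (s : seq I) (F G : I -> {poly rat}) :
  (forall j, eqm N (F j) (G j)) -> eqm N (\sum_(j <- s) F j) (\sum_(j <- s) G j).
Proof.
move=> h i hi; rewrite !coef_sum; apply: eq_bigr => j _; exact: h.
Qed.

Lemma fact_nz n : (n`!)%:R != 0 :> rat.
Proof. by rewrite pnatr_eq0 -lt0n fact_gt0. Qed.

Lemma binf n j : (j <= n)%N ->
  ((j`!)%:R)^-1 * (((n-j)`!)%:R)^-1 = ('C(n,j))%:R / (n`!)%:R :> rat.
Proof.
move=> h; rewrite -(bin_fact h) !natrM.
have h1 := fact_nz j; have h2 := fact_nz (n - j).
have h3 : ('C(n, j))%:R != 0 :> rat by rewrite pnatr_eq0 -lt0n bin_gt0.
field; rewrite h1 h2 h3 //.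
Qed.
Definition ex N (a : rat) : {poly rat} := \poly_(i < N) (a ^+ i / (i`!)%:R).

Lemma ex_mul N a b : eqm N (ex N a * ex N b) (ex N (a + b)).
Proof.
move=> i hi; rewrite coefM coef_poly hi addrC exprDn mulr_suml.
apply: eq_bigr => -[j hj] _ /=.
have hji : (j <= i)%N by rewrite -ltnS.
have h1 : (j < N)%N by apply: leq_ltn_trans hi.
have h2 : (i - j < N)%N by exact: leq_ltn_trans (leq_subr j i) hi.
rewrite !coef_poly h1 h2.
transitivity (a ^+ j * b ^+ (i - j) * (((j`!)%:R)^-1 * (((i - j)`!)%:R)^-1)).
  by ring.
by rewrite binf // -mulr_natr; ring.
Qed.

Lemma ex0 N : eqm N (ex N 0) 1.
Proof.
move=> i hi; rewrite coef_poly hi coef1 expr0n; case: i hi => //= i _.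
by rewrite mul0r.
Qed.

Lemma ex_pow N a j : eqm N (ex N a ^+ j) (ex N (a *+ j)).
Proof.
elim: j => [|j ih]; first by rewrite expr0 mulr0n; apply: eqm_sym; apply: ex0.
rewrite exprS mulrS; apply: eqm_trans (ex_mul N a (a *+ j)).
exact: eqmM.
Qed.

Definition uu N (c : rat) : {poly rat} := 'X * \poly_(i < N) (c ^+ i / ((i.+1)`!)%:R).

Lemma uu_ex N c : eqm N (c *: uu N c + 1) (ex N c).
Proof.
move=> i hi; rewrite coefD coefZ coefXM coef1 !coef_poly hi.
case: i hi => [|i] hi /=; first by rewrite mulr0 add0r expr0 divr1.
rewrite (ltn_trans (ltnSn i) hi) addr0 exprS mulrA //.
Qed.

Lemma uu_pow N c k : eqm N (c ^+ k *: uu N c ^+ k) ((-1 + ex N c) ^+ k).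
Proof.
rewrite -exprZn; apply: eqmX.
have := uu_ex N c => h i hi; rewrite coefD -h // coefD coefN coef1; ring.
Qed.

Lemma uuX N c : uu N c = 'X * \poly_(i < N) (c ^+ i / ((i.+1)`!)%:R). Proof. by []. Qed.

Lemma uu_pow_low N c k i : (i < k)%N -> (uu N c ^+ k)`_i = 0.
Proof. by move=> h; rewrite uuX exprMn coefXnM h. Qed.
Lemma exu_coef N m r k i : (0 < m)%N -> (i < N)%N ->
  (ex N r%:R * uu N m%:R ^+ k)`_i = (k`!)%:R * whitney m r i k / (i`!)%:R.
Proof.
move=> hm hi; set c := (m%:R : rat).
have hc : c != 0 by rewrite pnatr_eq0 -lt0n.
have hck : c ^+ k != 0 by rewrite expf_neq0.
have e : uu N c ^+ k = (c ^+ k)^-1 *: (c ^+ k *: uu N c ^+ k).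
  by rewrite scalerA mulVf // scale1r.
have H : eqm N (ex N r%:R * uu N c ^+ k)
   ((c ^+ k)^-1 *: (ex N r%:R * (-1 + ex N c) ^+ k)).
  by rewrite e -scalerAr; apply: eqmZ; apply: eqmM => //; exact: uu_pow.
rewrite H // exprDn mulr_sumr coefZ coef_sum /whitney.
rewrite !mulr_sumr mulr_suml; apply: eq_bigr => -[j hj] _ /=.

rewrite (mulrnAr (ex N r%:R)) coefMn mulrCA.
rewrite (_ : (-1) ^+ (k - j) = ((-1) ^+ (k - j))%:P); last first.
  by rewrite rmorphXn /= rmorphN1.
rewrite coefCM.
have -> : (ex N r%:R * ex N c ^+ j)`_i = (ex N (r%:R + c *+ j))`_i.
  rewrite -(ex_mul N _ _ i hi). exact: (eqmM _ _ _ _ _ (eqm_refl N (ex N r%:R)) (ex_pow N c j) _ hi).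
rewrite coef_poly hi natrD natrM -mulr_natr.
have := fact_nz k; have := fact_nz i => h1 h2.
rewrite -[_ *+ 'C(k, j)]mulr_natr -[c *+ j]mulr_natr /c.
move: hck; rewrite /c [m%:R * j%:R + _]addrC; move: ((-1) ^+ (k - j)) (m%:R ^+ k : rat) ((1 * r%:R + m%:R * j%:R) ^+ i : rat) => a b d hb.
field.
by rewrite h1 h2 hb.
Qed.

Lemma whitney_low m r i k : (0 < m)%N -> (i < k)%N -> whitney m r i k = 0.
Proof.
move=> hm h.
have := exu_coef i.+1 m r k i hm (ltnSn i).
rewrite -mulrA [X in _ = X]mulrC.
have -> : (ex i.+1 r%:R * uu i.+1 m%:R ^+ k)`_i = 0.
  by rewrite uuX exprMn mulrCA coefXnM h.
move/esym/eqP; move: (whitney m r i k) => w; rewrite !mulf_eq0 invr_eq0 (negbTE (fact_nz i)) (negbTE (fact_nz k)) !orbF.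
by move/eqP.
Qed.
Lemma size_bern_list n : size (bern_list n) = n.+1.
Proof. by elim: n => //= n ih; rewrite size_rcons ih. Qed.

Lemma bern_list_nth n j : (j <= n)%N -> nth 0 (bern_list n) j = bern j.
Proof.
elim: n j => [|n ih] j hj; first by move: hj; rewrite leqn0 => /eqP ->.
rewrite leq_eqVlt in hj; case/orP: hj => [/eqP -> //|hj].
rewrite /= nth_rcons size_bern_list hj; exact: ih.
Qed.

Lemma bern0 : bern 0 = 1. Proof. by []. Qed.

Lemma bern_rec n : \sum_(j < n.+2) ('C(n.+2, j))%:R * bern j = 0.
Proof.
rewrite big_ord_recr /=.
have -> : bern n.+1 = - (n.+2)%:R^-1 * \sum_(j < n.+1) ('C(n.+2, j))%:R * bern j.
  rewrite /bern /= nth_rcons size_bern_list ltnn eqxx; congr (_ * _).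
  by apply: eq_bigr => -[j hj] _ /=; rewrite bern_list_nth.
rewrite binSn.
have hn : (n.+2)%:R != 0 :> rat by rewrite pnatr_eq0.
move: (\sum_(j < n.+1) _) => S; field.
by move: hn; rewrite -addn2 natrD addrC.
Qed.

Definition bs N (c : rat) : {poly rat} := \poly_(i < N) (bern i * c ^+ i / (i`!)%:R).

Lemma bs_uu N c : eqm N (bs N c * uu N c) 'X.
Proof.
move=> i hi; rewrite uuX mulrCA coefXM coefX.
case: i hi => [|i] hi //=.
have hi' : (i < N)%N by exact: ltn_trans (ltnSn i) hi.
rewrite coefM.
have -> : \sum_(j < i.+1) (bs N c)`_j * (\poly_(i0 < N) (c ^+ i0 / (i0.+1)`!%:R))`_(i - j)
  = c ^+ i / ((i.+1)`!)%:R * \sum_(j < i.+1) ('C(i.+1, j))%:R * bern j.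
  rewrite mulr_sumr; apply: eq_bigr => -[j hj] _ /=.
  have hji : (j <= i)%N by rewrite -ltnS.
  have h1 : (j < N)%N by apply: leq_ltn_trans hi'.
  have h2 : (i - j < N)%N by exact: leq_ltn_trans (leq_subr j i) hi'.
  rewrite !coef_poly h1 h2.
  have e1 : c ^+ i = c ^+ j * c ^+ (i - j) by rewrite -exprD subnKC.
  have e2 := binf (i.+1) j (leq_trans hji (leqnSn i)).
  rewrite subSn // in e2.
  rewrite e1.
  transitivity (bern j * c ^+ j * c ^+ (i - j) * (((j`!)%:R)^-1 * (((i - j).+1`!)%:R)^-1)).
    by ring.
  by rewrite e2; ring.
case: i hi hi' => [|i] hi hi' /=.
  by rewrite big_ord1 bern0 expr0 bin0 mulr1.
by rewrite bern_rec mulr0.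
Qed.
Lemma comp_Xn (q : {poly rat}) i : 'X^i \Po q = q ^+ i.
Proof.
elim: i => [|i ih]; first by rewrite !expr0 -polyC1 comp_polyC.
by rewrite !exprS comp_polyM comp_polyX ih.
Qed.

Lemma comp_poly_def N (f : nat -> rat) (q : {poly rat}) :
  (\poly_(i < N) f i) \Po q = \sum_(i < N) f i *: q ^+ i.
Proof.
rewrite poly_def (big_morph (fun p => p \Po q) (fun p r => comp_polyD p r q) (comp_poly0 q)).
by apply: eq_bigr => i _; rewrite comp_polyZ comp_Xn.
Qed.

Lemma eqm_comp N p p' (w : {poly rat}) :
  eqm N p p' -> eqm N (p \Po ('X * w)) (p' \Po ('X * w)).
Proof.
move=> h j hj; apply/eqP; rewrite -subr_eq0 -coefB -comp_polyB comp_polyE coef_sum.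
apply/eqP; apply: big1 => -[i hi] _ /=; rewrite coefZ.
case: (ltnP i N) => hiN.
  by rewrite coefB h // subrr mul0r.
by rewrite exprMn coefXnM (leq_trans hj hiN) mulr0.
Qed.

Definition Vp N : {poly rat} := \poly_(i < N) (if i == 0%N then 0 else ((i`!)%:R)^-1).
Definition Pg N (x : rat) : {poly rat} := \poly_(k < N) ((bernpoly k).[x] / (k`!)%:R).

Lemma Vp_uu N : eqm N (Vp N) (uu N 1).
Proof.
move=> i hi; rewrite coef_poly hi uuX coefXM; case: i hi => //= i hi.
by rewrite coef_poly (ltn_trans (ltnSn i) hi) expr1n mul1r.
Qed.

Lemma bernpoly_eval k x :
  (bernpoly k).[x] = \sum_(j < k.+1) ('C(k, j))%:R * bern j * x ^+ (k - j).
Proof.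
rewrite /bernpoly horner_sum; apply: eq_bigr => j _.
by rewrite hornerZ hornerXn.
Qed.

Lemma Pg_bs N x : eqm N (Pg N x) (bs N 1 * ex N x).
Proof.
move=> i hi; rewrite coef_poly hi coefM bernpoly_eval mulr_suml.
apply: eq_bigr => -[j hj] _ /=.
have hji : (j <= i)%N by rewrite -ltnS.
have h1 : (j < N)%N by apply: leq_ltn_trans hi.
have h2 : (i - j < N)%N by exact: leq_ltn_trans (leq_subr j i) hi.
rewrite !coef_poly h1 h2 expr1n mulr1.
transitivity (bern j * x ^+ (i - j) * (('C(i, j))%:R / (i`!)%:R)); first by ring.
by rewrite -binf //; ring.
Qed.

Lemma y_ident N x : eqm N (Vp N * Pg N x) ('X * ex N x).
Proof.
apply: eqm_trans (eqmM _ _ _ _ _ (Vp_uu N) (Pg_bs N x)) _.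
rewrite mulrA [uu N 1 * _]mulrC.
apply: eqmM => //; exact: bs_uu.
Qed.

Lemma chain N m r x : let u := uu N m%:R in
  eqm N ('X * (ex N r%:R * (ex N x \Po u)))
        ((bs N m%:R * (Vp N \Po u)) * (ex N r%:R * (Pg N x \Po u))).
Proof.
move=> u.
have h1 : eqm N ('X * (ex N r%:R * (ex N x \Po u)))
   (bs N m%:R * ex N r%:R * (u * (ex N x \Po u))).
  have -> : bs N m%:R * ex N r%:R * (u * (ex N x \Po u)) =
     (bs N m%:R * u) * (ex N r%:R * (ex N x \Po u)) by ring.
  apply: eqmM => //; apply: eqm_sym; exact: bs_uu.
apply: eqm_trans h1 _.
have -> : u * (ex N x \Po u) = ('X * ex N x) \Po u by rewrite comp_polyM comp_polyX.
have h2 : eqm N (('X * ex N x) \Po u) ((Vp N * Pg N x) \Po u).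
  apply: eqm_comp; apply: eqm_sym; exact: y_ident.
apply: eqm_trans (eqmM _ _ _ _ _ (eqm_refl N (bs N m%:R * ex N r%:R)) h2) _.
rewrite comp_polyM.
have -> : bs N m%:R * ex N r%:R * ((Vp N \Po u) * (Pg N x \Po u)) =
   (bs N m%:R * (Vp N \Po u)) * (ex N r%:R * (Pg N x \Po u)) by ring.
by [].
Qed.
Lemma coefF N m r x j : (0 < m)%N -> (j < N)%N ->
  (ex N r%:R * (ex N x \Po uu N m%:R))`_j
  = (\sum_(k < N) whitney m r j k * x ^+ k) / (j`!)%:R.
Proof.
move=> hm hj; rewrite [ex N x]/ex comp_poly_def mulr_sumr coef_sum mulr_suml.
apply: eq_bigr => k _; rewrite -scalerAr coefZ exu_coef //.
have := fact_nz k; have := fact_nz j => h1 h2.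
move: (x ^+ k) (whitney m r j k) => a b; field.
by rewrite h1 h2.
Qed.

Lemma coefQ N m r x j : (0 < m)%N -> (j < N)%N ->
  (ex N r%:R * (Pg N x \Po uu N m%:R))`_j
  = (\sum_(k < N) (bernpoly k).[x] * whitney m r j k) / (j`!)%:R.
Proof.
move=> hm hj; rewrite /Pg comp_poly_def mulr_sumr coef_sum mulr_suml.
apply: eq_bigr => k _; rewrite -scalerAr coefZ exu_coef //.
have := fact_nz k; have := fact_nz j => h1 h2.
move: ((bernpoly k).[x]) (whitney m r j k) => a b; field.
by rewrite h1 h2.
Qed.

Lemma coefVt N m j : (0 < m)%N -> (j < N)%N ->
  (Vp N \Po uu N m%:R)`_j
  = (\sum_(k < N) (if (k : nat) == 0%N then 0 else whitney m 0 j k)) / (j`!)%:R.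
Proof.
move=> hm hj; rewrite /Vp comp_poly_def coef_sum mulr_suml.
apply: eq_bigr => k _; rewrite coefZ.
have -> : (uu N m%:R ^+ k)`_j = (ex N 0%:R * uu N m%:R ^+ k)`_j.
  by rewrite (eqmM _ _ _ _ _ (ex0 N) (eqm_refl N (uu N m%:R ^+ k)) _ hj) mul1r.
rewrite exu_coef //.
case: (k : nat) => [|k'] /=; first by rewrite !mul0r.
have := fact_nz k'.+1; have := fact_nz j => h1 h2.
move: (whitney m 0 j k'.+1) => b; field.
by rewrite h1 h2.
Qed.
Lemma sum_trunc n1 n2 (F : nat -> rat) : (n1 <= n2)%N ->
  (forall k, (n1 <= k)%N -> (k < n2)%N -> F k = 0) ->
  \sum_(k < n2) F k = \sum_(k < n1) F k.
Proof.
move=> h hF; rewrite (big_ord_widen _ _ h) [RHS]big_mkcond.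
apply: eq_bigr => -[k hk] _ /=; case: ifP => // /negbT; rewrite -leqNgt => h'.
exact: hF.
Qed.

Lemma whitney_00 m s : whitney m 0 s.+1 0 = 0.
Proof. by rewrite /whitney big_ord1 /= muln0 addn0 expr0n /= !mulr0. Qed.

Lemma binR n j : (j <= n)%N ->
  ('C(n, j))%:R = (n`!)%:R / ((j`!)%:R * ((n - j)`!)%:R) :> rat.
Proof.
move=> h; rewrite -(bin_fact h) !natrM.
have h1 := fact_nz j; have h2 := fact_nz (n - j).
field; by rewrite h1 h2.
Qed.

Lemma coefVt0 N m : (0 < m)%N -> (0 < N)%N -> (Vp N \Po uu N m%:R)`_0 = 0.
Proof.
move=> hm hN; rewrite coefVt // big1 ?mul0r // => -[k hk] _ /=.
by case: k hk => //= k hk; rewrite whitney_low.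
Qed.

Lemma coefVtS N m s : (0 < m)%N -> (s.+1 < N)%N ->
  (Vp N \Po uu N m%:R)`_s.+1 = (touchard m s.+1).[1] / ((s.+1)`!)%:R.
Proof.
move=> hm hN; rewrite coefVt //; congr (_ / _).
rewrite /touchard horner_sum.
rewrite (sum_trunc (s.+2) N (fun k => if k == 0%N then 0 else whitney m 0 s.+1 k)).
 - apply: eq_bigr => -[k hk] _ /=; rewrite hornerZ hornerXn expr1n mulr1.
   by case: k hk => //= _; rewrite whitney_00.
 - exact: hN.
 - move=> k hk _; case: (k == 0%N) => //; exact: whitney_low.
Qed.

Lemma dowling_eval m r n x :
  (dowling m r n).[x] = \sum_(k < n.+1) whitney m r n k * x ^+ k.
Proof. by rewrite /dowling horner_sum; apply: eq_bigr => k _; rewrite hornerZ hornerXn. Qed.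

Lemma main_eval m r n x : (1 <= m)%N ->
  (dowling m r n).[x] =
  (n.+1%:R)^-1 *
    \sum_(k < n.+1) \sum_(l < (n - k).+1) \sum_(s < l.+1)
      ((('C(n.+1, l.+1))%:R * ('C(l.+1, s.+1))%:R * whitney m r (n - l) k
        * m%:R ^+ (l - s) * (touchard m s.+1).[1] * bern (l - s)) * (bernpoly k).[x]).
Proof.
move=> hm.
set N := n.+2.
have key := chain N m r x (n.+1) (ltnSn _).
rewrite coefXM /= coefF // coefM in key.
rewrite [X in _ = X]big_ord_recl /= coef0M coefVt0 // mulr0 mul0r add0r in key.
have HP : forall l, (l < n.+1)%N -> (bs N m%:R * (Vp N \Po uu N m%:R))`_l.+1 =
   \sum_(s < l.+1) (bern (l - s) * m%:R ^+ (l - s) / ((l - s)`!)%:R) *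
      ((touchard m s.+1).[1] / ((s.+1)`!)%:R).
  move=> l hl; rewrite coefM big_ord_recr /= subnn coefVt0 // mulr0 addr0.
  rewrite (reindex_inj rev_ord_inj) /=; apply: eq_bigr => -[s hs] _ /=.
  have hsl : (s <= l)%N by rewrite -ltnS.
  rewrite subSS coef_poly.
  have -> : (l - s < N)%N by apply: leq_ltn_trans (leq_subr s l) _; apply: ltn_trans hl _.
  have -> : (l.+1 - (l - s) = s.+1)%N by rewrite subSn ?leq_subr // subKn.
  rewrite coefVtS //; rewrite /N !ltnS; exact: leq_trans hsl _.
have HQ : forall l, (l < n.+1)%N -> (ex N r%:R * (Pg N x \Po uu N m%:R))`_(n - l) =
   (\sum_(k < n.+1) (bernpoly k).[x] * whitney m r (n - l) k) / ((n - l)`!)%:R.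
  move=> l hl; rewrite coefQ //; last by rewrite /N; apply: leq_ltn_trans (leq_subr l n) _.
  congr (_ / _); apply: (sum_trunc _ _ (fun k => (bernpoly k).[x] * whitney m r (n - l) k)) => // k hk _; rewrite whitney_low ?mulr0 //.
  by apply: leq_trans hk; rewrite ltnS leq_subr.
have HL : (\sum_(k < N) whitney m r n k * x ^+ k) = (dowling m r n).[x].
  rewrite dowling_eval; apply: (sum_trunc _ _ (fun k => whitney m r n k * x ^+ k)) => // k hk _; by rewrite whitney_low ?mul0r.
rewrite HL in key.
rewrite (eq_bigr (fun l : 'I_n.+1 => (\sum_(s < l.+1) (bern (l - s) * m%:R ^+ (l - s) / ((l - s)`!)%:R) * ((touchard m s.+1).[1] / ((s.+1)`!)%:R)) * ((\sum_(k < n.+1) (bernpoly k).[x] * whitney m r (n - l) k) / ((n - l)`!)%:R))) in key; last first.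
  move=> -[l hl] _; rewrite /bump /= HP // subSS HQ //.
have -> : (dowling m r n).[x] = (n`!)%:R * ((dowling m r n).[x] / (n`!)%:R).
  by have := fact_nz n => h; field.
rewrite key.
set X := fun (k l s : nat) => ('C(n.+1, l.+1))%:R * ('C(l.+1, s.+1))%:R * whitney m r (n - l) k *
           m%:R ^+ (l - s) * (touchard m s.+1).[1] * bern (l - s) * (bernpoly k).[x].
rewrite [in RHS](eq_bigr (fun k : 'I_n.+1 => \sum_(l < n.+1) \sum_(s < l.+1) X k l s)); last first.
  move=> -[k hk] _ /=; symmetry.
  apply: (sum_trunc _ _ (fun l => \sum_(s < l.+1) X k l s)); first by rewrite ltnS leq_subr.
  move=> l hl1 hl2; apply: big1 => s _; rewrite /X whitney_low //; last by rewrite ltn_subCl // -ltnS.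
  by rewrite mulr0 !mul0r.
rewrite [in RHS]exchange_big /= !mulr_sumr; apply: eq_bigr => -[l hl] _ /=.
rewrite [in RHS]mulr_sumr [Y in _ * Y = _]mulrC mulr_suml mulr_suml mulr_sumr.
apply: eq_bigr => -[k hk] _ /=.
rewrite [in RHS]mulr_sumr !mulr_sumr; apply: eq_bigr => -[s hs] _ /=.
have hsl : (s <= l)%N by rewrite -ltnS.
have hln : (l <= n)%N by rewrite -ltnS.
rewrite /X binR ?ltnS // binR ?ltnS // !subSS (factS n) natrM.
have h1 := fact_nz n; have h2 := fact_nz (n - l); have h3 := fact_nz (l - s).
have h4 := fact_nz s.+1; have h5 := fact_nz l.+1.
have h6 : (n.+1)%:R != 0 :> rat by rewrite pnatr_eq0.
move: ((bernpoly k).[x]) (whitney m r (n - l) k) (m%:R ^+ (l - s) : rat)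
  ((touchard m s.+1).[1]) (bern (l - s)) => a b c d e.
move: h1 h2 h3 h4 h5 h6.
move: (n`!%:R : rat) ((n - l)`!%:R : rat) ((l - s)`!%:R : rat) ((s.+1)`!%:R : rat)
  ((l.+1)`!%:R : rat) ((n.+1)%:R : rat) => f1 f2 f3 f4 f5 f6 h1 h2 h3 h4 h5 h6.
field.
by rewrite h2 h3 h4 h5 h6.
Qed.
Lemma poly_eval_eq (p q : {poly rat}) : (forall x, p.[x] = q.[x]) -> p = q.
Proof.
move=> h; apply/eqP; rewrite -subr_eq0; apply/eqP.
apply: (@roots_geq_poly_eq0 _ _ [seq (i%:R : rat) | i <- iota 0 (size (p - q))]).
- apply/allP => y /mapP [i _ ->]; by rewrite rootE hornerD hornerN h subrr.
- rewrite map_inj_uniq ?iota_uniq // => a b /eqP; by rewrite eqr_nat => /eqP.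
- by rewrite size_map size_iota.
Qed.

Theorem mainTheorem16 (m r n : nat) (hm : (1 <= m)%N) :
  dowling m r n =
  (n.+1%:R)^-1 *:
    \sum_(k < n.+1) \sum_(l < (n - k).+1) \sum_(s < l.+1)
      ((('C(n.+1, l.+1))%:R * ('C(l.+1, s.+1))%:R * whitney m r (n - l) k
        * m%:R ^+ (l - s) * (touchard m s.+1).[1] * bern (l - s)) *: bernpoly k).
Proof.
apply: poly_eval_eq => x; rewrite main_eval // hornerZ horner_sum; congr (_ * _).
apply: eq_bigr => k _; rewrite [in RHS]horner_sum; apply: eq_bigr => l _.
rewrite [in RHS]horner_sum; apply: eq_bigr => s _; by rewrite hornerZ.
Qed.
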